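(* Let $d,d'\in\mathcal D$ with quantities $(\mathbf P,\mathbf r,\boldsymbol\pi,J_\mu,\mathbf g)$ for $d$ and $(\mathbf P',\mathbf r')$ for $d'$. The function $\delta\mapsto J^\delta_{\mu,\sigma}$ (combined metric of the mixed policy $d^{\delta,d'}$) is differentiable at $\delta=0$ (from the right), with $$\frac{\mathrm d J^\delta_{\mu,\sigma}}{\mathrm d\delta}\Big|_{\delta=0}=\boldsymbol\pi\Big[(\mathbf P'-\mathbf P)\mathbf g+\mathbf r'-\beta(\mathbf r'-J_\mu\mathbf 1)^2_\odot-\mathbf r+\beta(\mathbf r-J_\mu\mathbf 1)^2_\odot\Big].$$
   Context: Let $\mathcal S=\{1,\dots,S\}$ be a finite state space and $\mathcal A$ a finite action set, with transition probabilities $p^a(i,j)$ ($\sum_j p^a(i,j)=1$) and rewards $r(i,a)\in\mathbb R$. A deterministic stationary policy is a map $d:\mathcal S\to\mathcal A$; $\mathcal D$ is the set of these; $\mathbf P^d$ has entries $p^{d(i)}(i,j)$ and $\mathbf r^d$ has entries $r(i,d(i))$. Standing assumption: every $\mathbf P^d$, $d\in\mathcal D$, is irreducible. For $d$: $\boldsymbol\pi^d$ is the unique stationary distribution (row vector, all entries positive), $J^d_\mu=\boldsymbol\pi^d\mathbf r^d$, and for fixed $\beta>0$, $J^d_{\mu,\sigma}=\boldsymbol\pi^d\mathbf f^d$ with $f^d(i)=r(i,d(i))-\beta(r(i,d(i))-J^d_\mu)^2$; $\mathbf g^d$ is any solution of $\mathbf g^d=\mathbf f^d-J^d_{\mu,\sigma}\mathbf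 1+\mathbf P^d\mathbf g^d$. Mixed policy: for $d,d'\in\mathcal D$ and $\delta\in[0,1]$, $d^{\delta,d'}$ is the randomized stationary policy which at each visit to state $i$ independently takes action $d(i)$ with probability $1-\delta$ and $d'(i)$ with probability $\delta$. Its transition matrix is $\mathbf P^\delta=\mathbf P+\delta(\mathbf P'-\mathbf P)$ (irreducible, with unique positive stationary distribution $\boldsymbol\pi^\delta$), its mean is $J^\delta_\mu=\boldsymbol\pi^\delta[\mathbf r+\delta(\mathbf r'-\mathbf r)]$, and its combined metric is $J^\delta_{\mu,\sigma}=\boldsymbol\pi^\delta\mathbf f^\delta$ with $f^\delta(i)=(1-\delta)[r(i)-\beta(r(i)-J^\delta_\mu)^2]+\delta[r'(i)-\beta(r'(i)-J^\delta_\mu)^2]$. For a vector $\mathbf v$, $(\mathbf v)^2_\odot$ is its componentwise square. *)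

(* Defs.v *)
From HB Require Import structures.
From mathcomp Require Import all_boot all_order all_algebra.
From mathcomp Require Import all_classical all_reals all_analysis.
Set Implicit Arguments. Unset Strict Implicit. Unset Printing Implicit Defensive.
Import Order.TTheory GRing.Theory Num.Theory.
Local Open Scope ring_scope.

Section MDP.
Variables (R : realType) (n : nat) (A : finType).
(* States are 'I_n.+1 (S = n+1 >= 1 states); p a is the transition matrix of
   action a, r i a the reward. *)

Definition stochastic (P : 'M[R]_n.+1) : Prop :=
  (forall i j, 0 <= P i j) /\ (forall i, \sum_j P i j = 1).

Definition irreducible (P : 'M[R]_n.+1) : Prop :=
  forall i j, exists k : nat, 0 < (P ^+ k) i j.

Definition stationary (P : 'M[R]_n.+1) (pi : 'rV[R]_n.+1) : Prop :=
  pi *m P = pi /\ (forall j, 0 <= pi 0 j) /\ \sum_j pi 0 j = 1.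

(* "the" stationary distribution (unique when P is irreducible) *)
Definition stat_dist (P : 'M[R]_n.+1) : 'rV[R]_n.+1 :=
  xget 0 [set pi | stationary P pi].

Definition Pmat (p : A -> 'M[R]_n.+1) (d : 'I_n.+1 -> A) : 'M[R]_n.+1 :=
  \matrix_(i, j) p (d i) i j.

Definition rvec (r : 'I_n.+1 -> A -> R) (d : 'I_n.+1 -> A) : 'cV[R]_n.+1 :=
  \col_i r i (d i).

Definition Jmu p r d : R := (stat_dist (Pmat p d) *m rvec r d) 0 0.

Definition fvec (beta : R) p r d : 'cV[R]_n.+1 :=
  \col_i (r i (d i) - beta * (r i (d i) - Jmu p r d) ^+ 2).

Definition Jmusig (beta : R) p r d : R :=
  (stat_dist (Pmat p d) *m fvec beta p r d) 0 0.

Definition Pmix p d d' (delta : R) : 'M[R]_n.+1 :=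
  Pmat p d + delta *: (Pmat p d' - Pmat p d).

Definition rmix r d d' (delta : R) : 'cV[R]_n.+1 :=
  rvec r d + delta *: (rvec r d' - rvec r d).

Definition Jmu_mix p r d d' (delta : R) : R :=
  (stat_dist (Pmix p d d' delta) *m rmix r d d' delta) 0 0.

Definition fmix (beta : R) p r d d' (delta : R) : 'cV[R]_n.+1 :=
  let J := Jmu_mix p r d d' delta in
  \col_i ((1 - delta) * (r i (d i) - beta * (r i (d i) - J) ^+ 2)
          + delta * (r i (d' i) - beta * (r i (d' i) - J) ^+ 2)).

Definition Jmusig_mix (beta : R) p r d d' (delta : R) : R :=
  (stat_dist (Pmix p d d' delta) *m fmix beta p r d d' delta) 0 0.

End MDP.

(* Main.v *)
Require Import Defs.
From HB Require Import structures.
From mathcomp Require Import all_boot all_order all_algebra.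
From mathcomp Require Import all_classical all_reals all_analysis.
From mathcomp Require Import ring lra.
Import Order.TTheory GRing.Theory Num.Theory numFieldNormedType.Exports.
Local Open Scope ring_scope.
Local Open Scope classical_set_scope.
Set Implicit Arguments. Unset Strict Implicit.
Section Gen.
Variables (R : realType) (n : nat).
Implicit Types (P Q : 'M[R]_n.+1).

Lemma stoch_mul P Q : stochastic P -> stochastic Q -> stochastic (P *m Q).
Proof.
move=> [P0 P1] [Q0 Q1]; split=> [i j|i].
  by rewrite mxE; apply: sumr_ge0 => l _; apply: mulr_ge0.
under eq_bigr do rewrite mxE.
rewrite exchange_big /=.
under eq_bigr do rewrite -mulr_sumr Q1 mulr1.
exact: P1.
Qed.

Lemma stoch_pow k P : stochastic P -> stochastic (P ^+ k).
Proof.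
move=> sP; elim: k => [|k IH].
  rewrite expr0; split=> [i j|i]; first by rewrite mxE ler0n.
  rewrite (bigD1 i) //= big1 => [|j /negbTE nji]; first by rewrite mxE eqxx addr0.
  by rewrite mxE eq_sym nji.
by rewrite exprS -mulmxE; apply: stoch_mul.
Qed.

Lemma harmonic_const P (z : 'cV[R]_n.+1) : stochastic P -> irreducible P ->
  P *m z = z -> forall i j, z i 0 = z j 0.
Proof.
move=> sP iP Pz.
have Pkz k : (P ^+ k) *m z = z.
  elim: k => [|k IH]; first by rewrite expr0 mul1mx.
  by rewrite exprS -mulmxE -mulmxA IH Pz.
case: (arg_maxP (fun i => z i 0) (isT : predT ord0)) => i0 _ Hmax.
suff all_eq j : z j 0 = z i0 0 by move=> i j; rewrite !all_eq.
have [k Hk] := iP i0 j.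
have [Q0 Q1] := stoch_pow k sP.
have e : \sum_l (P ^+ k) i0 l * (z i0 0 - z l 0) = 0.
  under eq_bigr do rewrite mulrBr.
  rewrite sumrB -mulr_suml Q1 mul1r.
  have := congr1 (fun M : 'cV[R]_n.+1 => M i0 0) (Pkz k); rewrite mxE => ->.
  by rewrite subrr.
have hge l : true -> 0 <= (P ^+ k) i0 l * (z i0 0 - z l 0).
  by move=> _; rewrite mulr_ge0 // subr_ge0; exact: Hmax l isT.
have := psumr_eq0P hge e.
move=> /(_ j isT) /eqP.
rewrite mulf_eq0 (gt_eqF Hk) /= subr_eq0 => /eqP ->//.
Qed.

Lemma stoch_one P : stochastic P -> P *m const_mx 1 = const_mx 1 :> 'cV[R]_n.+1.
Proof.
move=> [_ P1]; apply/matrixP=> i j; rewrite !mxE.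
under eq_bigr do rewrite mxE mulr1.
exact: P1.
Qed.

Lemma exists_stat P : stochastic P -> exists pi, stationary P pi.
Proof.
move=> sP; have [P0 P1] := sP.
set u := const_mx 1 : 'cV[R]_n.+1.
have hu : (1%:M - P) *m u = 0 by rewrite mulmxBl mul1mx stoch_one // subrr.
have : \det (1%:M - P) == 0.
  rewrite -det_tr; apply/det0P; exists u^T.
    apply/eqP => /matrixP /(_ 0 0); rewrite !mxE => /eqP; rewrite oner_eq0 //.
  by rewrite -trmx_mul hu trmx0.
move=> /det0P [v vn0 hv].
have vP : v *m P = v by apply/eqP; rewrite eq_sym -subr_eq0 -{1}(mulmx1 v) -mulmxBr hv.
set w := \row_j `|v 0 j|.
have le_j j : w 0 j <= (w *m P) 0 j.
  rewrite !mxE -{1}vP mxE (le_trans (ler_norm_sum _ _ _)) //.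
  by apply: ler_sum => i _; rewrite mxE normrM (ger0_norm (P0 i j)).
have sum0 : \sum_j ((w *m P) 0 j - w 0 j) = 0.
  rewrite sumrB; under eq_bigr do rewrite mxE.
  rewrite exchange_big /=.
  under eq_bigr do rewrite -mulr_sumr P1 mulr1.
  by rewrite subrr.
have wP : w *m P = w.
  apply/matrixP => i j; rewrite ord1; apply/eqP; rewrite -subr_eq0; apply/eqP.
  have hge j' : true -> 0 <= (w *m P) 0 j' - w 0 j' by move=> _; rewrite subr_ge0.
  exact: (psumr_eq0P hge sum0).
have s_gt0 : 0 < \sum_j w 0 j.
  rewrite lt_def sumr_ge0 ?andbT; last by move=> j _; rewrite mxE.
  apply/eqP => s0; move/eqP: vn0; apply; apply/matrixP => i j; rewrite ord1 mxE.
  have hge j' : true -> 0 <= w 0 j' by move=> _; rewrite mxE.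
  have := psumr_eq0P hge s0 (i:=j) isT.
  by move=> /eqP; rewrite mxE normr_eq0 => /eqP.
exists ((\sum_j w 0 j)^-1 *: w); split; [|split].
- by rewrite -scalemxAl wP.
- move=> j; rewrite mxE; apply: mulr_ge0; first by rewrite invr_ge0 ltW.
  by rewrite /w mxE.
- under eq_bigr do rewrite mxE.
  by rewrite -mulr_sumr mulVf // gt_eqF.
Qed.

Lemma stat_distP P : stochastic P -> stationary P (stat_dist P).
Proof. by move=> sP; rewrite /stat_dist; apply: (xgetPex 0 (exists_stat sP)). Qed.


Definition Mfund P (pi : 'rV[R]_n.+1) : 'M[R]_n.+1 :=
  1%:M - P + const_mx 1 *m pi.

Lemma stat_one P (pi : 'rV[R]_n.+1) : stationary P pi ->
  pi *m const_mx 1 = 1%:M.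
Proof.
move=> [_ [_ s1]]; apply/matrixP => i j; rewrite !ord1 !mxE /=.
by under eq_bigr do rewrite mxE mulr1.
Qed.

Lemma Mfund_unit P pi : stochastic P -> irreducible P -> stationary P pi ->
  Mfund P pi \in unitmx.
Proof.
move=> sP iP spi; have [piP [pi0 pi1]] := spi.
rewrite unitmxE unitfE; apply/negP => /eqP d0.
have : \det (Mfund P pi)^T == 0 by rewrite det_tr d0.
move=> /det0P [v vn0 hv].
set z := v^T.
have Mz : Mfund P pi *m z = 0 by rewrite /z -[Mfund P pi]trmxK -trmx_mul hv trmx0.
have piz : pi *m z = 0.
  have := congr1 (mulmx pi) Mz.
  rewrite mulmx0 mulmxA /Mfund mulmxDr mulmxBr mulmx1 piP subrr add0r.
  by rewrite mulmxA (stat_one spi) mul1mx.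
have Pz : P *m z = z.
  move: Mz; rewrite /Mfund !mulmxDl mulNmx mul1mx -mulmxA piz mulmx0 addr0.
  by move/eqP; rewrite subr_eq0 => /eqP.
have zc := harmonic_const sP iP Pz.
have z0 : z = 0.
  apply/matrixP => i j; rewrite ord1 [RHS]mxE (zc i 0).
  have := congr1 (fun M : 'M[R]_1 => M 0 0) piz; rewrite !mxE.
  under eq_bigr do rewrite (zc _ 0).
  by rewrite -mulr_suml pi1 mul1r /z mxE.
by move/eqP: vn0; apply; rewrite -[v]trmxK -/z z0 trmx0.
Qed.

Lemma stat_perturb P D (pi pi' : 'rV[R]_n.+1) (h : R) :
  stationary P pi -> stationary (P + h *: D) pi' ->
  (pi' - pi) *m Mfund P pi = h *: (pi' *m D).
Proof.
move=> spi spi'; have [piP _] := spi; have [pi'P _] := spi'.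
have e : pi' *m P = pi' - h *: (pi' *m D).
  by rewrite -{2}pi'P mulmxDr -scalemxAr addrK.
rewrite /Mfund !mulmxDr mulmxN mulmx1 !mulmxA mulmxBl e piP mulmxBl (stat_one spi) (stat_one spi').
rewrite subrr mul0mx addr0.
by rewrite [pi' - _ - pi]addrAC opprB addrCA subrr addr0.
Qed.

End Gen.
Section Lim.
Variable (R : realType).

Lemma cvg_idr : (fun h : R => h) @ 0^'+ --> 0.
Proof. exact: cvg_at_right_filter cvg_id. Qed.

Lemma cvg_vanish (e : R -> R) (C : R) :
  (\forall h \near 0^'+, `|e h| <= C) -> (fun h => h * e h) @ 0^'+ --> 0.
Proof.
move=> eC.
have C0 : (fun h : R => h * C) @ 0^'+ --> 0.
  by rewrite -[X in _ --> X](mul0r C); exact: (cvgMl (b := C) cvg_idr).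
have NC0 : (fun h : R => - (h * C)) @ 0^'+ --> 0.
  rewrite -[X in _ --> X]oppr0; exact: (cvgN C0).
apply: (squeeze_cvgr _ NC0 C0).
near=> h.
have hp : 0 < h by near: h; exact: nbhs_right_gt.
have hC : `|e h| <= C by near: h; exact: eC.
rewrite -mulrN !ler_pM2l //.
by rewrite -ler_norml.
Unshelve. all: by end_near.
Qed.

Lemma cvg_sumr (I : finType) (f : I -> R -> R) (l : I -> R) :
  (forall i, f i @ 0^'+ --> l i) ->
  (fun h => \sum_i f i h) @ 0^'+ --> \sum_i l i.
Proof.
move=> fl; rewrite /index_enum; elim: (Finite.enum I) => [|i s IH].
  under eq_fun do rewrite big_nil. by rewrite big_nil; exact: cvg_cst.
under eq_fun do rewrite big_cons. rewrite big_cons.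
by apply: cvgD => //; apply: fl.
Qed.
End Lim.
Unset Implicit Arguments.

Lemma cvg_near_eqr (R : realType) (f g : R -> R) (l : R) :
  (\forall h \near 0^'+, f h = g h) -> g @ 0^'+ --> l -> f @ 0^'+ --> l.
Proof.
move=> fg gl; apply: cvg_trans gl; apply: near_eq_cvg.
by near=> h; rewrite (near fg h).
Unshelve. all: by end_near.
Qed.

Lemma zmod_lem (V : zmodType) (x y z : V) : x - y - (x - z - y) = z.
Proof. by rewrite [x - z - y]addrAC opprB addrCA subrr addr0. Qed.

Theorem lemma2 (R : realType) (n : nat) (A : finType)
  (p : A -> 'M[R]_n.+1) (r : 'I_n.+1 -> A -> R) (beta : R)
  (hp : forall a, stochastic (p a))
  (hirr : forall d : 'I_n.+1 -> A, irreducible (Pmat p d))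
  (hbeta : 0 < beta)
  (d d' : 'I_n.+1 -> A) (g : 'cV[R]_n.+1)
  (hg : g = fvec beta p r d - (Jmusig beta p r d) *: const_mx 1
            + Pmat p d *m g) :
  let pi := stat_dist (Pmat p d) in
  let J := Jmu p r d in
  (fun h : R => h^-1 * (Jmusig_mix beta p r d d' h - Jmusig_mix beta p r d d' 0))
    @ 0^'+ -->
  (pi *m ((Pmat p d' - Pmat p d) *m g
          + \col_i (r i (d' i) - beta * (r i (d' i) - J) ^+ 2
                    - r i (d i) + beta * (r i (d i) - J) ^+ 2))) 0 0.
Proof.
move=> pi J.
set P := Pmat p d; set P' := Pmat p d'; set D := P' - P.
set rv := rvec r d; set rv' := rvec r d'.
set f := fvec beta p r d.
set u := const_mx 1 : 'cV[R]_n.+1.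
have stP (e : 'I_n.+1 -> A) : stochastic (Pmat p e).
  split=> [i j|i]; first by rewrite mxE; have [] := hp (e i).
  under eq_bigr do rewrite mxE; by have [_ ->] := hp (e i).
have sP : stochastic P := stP d.
have spi : stationary P pi := stat_distP sP.
have [piP [pi0 pi1]] := spi.
set pih := fun h => stat_dist (Pmix p d d' h).
have PmixE h : Pmix p d d' h = P + h *: D by [].
have stmix h : 0 <= h <= 1 -> stochastic (P + h *: D).
  move=> /andP [h0 h1]; have [P0 P1] := sP; have [P'0 P'1] := stP d'.
  split=> [i j|i].
    have := P0 i j; have := P'0 i j; rewrite !mxE => a b.
    have -> : p (d i) i j + h * (p (d' i) i j - p (d i) i j) = (1 - h) * p (d i) i j + h * p (d' i) i j by ring.
    by rewrite addr_ge0 // mulr_ge0 // subr_ge0.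
  have := P1 i; have := P'1 i; rewrite /P /P'.
  under eq_bigr do rewrite mxE. move=> a. under eq_bigr do rewrite mxE. move=> b.
  under eq_bigr do rewrite !mxE.
  by rewrite big_split /= -mulr_sumr sumrB a b subrr mulr0 addr0.
have spih h : 0 <= h <= 1 -> stationary (P + h *: D) (pih h).
  by move=> h01; apply: stat_distP; exact: stmix.
have Mu := Mfund_unit sP (hirr d) spi.
set Mi := invmx (Mfund P pi).
have E1 h : 0 <= h <= 1 -> pih h = pi + h *: (pih h *m D *m Mi).
  move=> h01; have := stat_perturb spi (spih h h01).
  move=> /(congr1 (mulmx^~ Mi)); rewrite mulmxK // -scalemxAl => <-.
  by rewrite addrC subrK.
have pih_le1 h j : 0 <= h <= 1 -> 0 <= pih h 0 j <= 1.
  move=> h01; have [_ [p0 p1]] := spih h h01.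
  rewrite p0 /= -p1 (bigD1 j) //= lerDl sumr_ge0 // => i _; exact: p0.
have hnear : \forall h \near (0:R)^'+, 0 <= h <= 1.
  near=> h.
  have h0 : 0 < h by near: h; exact: nbhs_right_gt.
  have h1 : h < 1 by near: h; apply: nbhs_right_lt; exact: ltr01.
  by rewrite !ltW.
set Nm := D *m Mi.
have cvg_pi j : (fun h => pih h 0 j) @ 0^'+ --> pi 0 j.
  apply: (@cvg_near_eqr _ _ (fun h => pi 0 j + h * (pih h *m Nm) 0 j)).
    near=> h; rewrite {1}(E1 h); last by near: h; exact: hnear.
    by rewrite /Nm -mulmxA !mxE.
  rewrite -[X in _ --> X]addr0; apply: cvgD; first exact: cvg_cst.
  apply: (@cvg_vanish _ _ (\sum_i `|Nm i j|)).
  near=> h; have h01 : 0 <= h <= 1 by near: h; exact: hnear.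
  rewrite mxE (le_trans (ler_norm_sum _ _ _)) //.
  apply: ler_sum => i _; rewrite normrM ler_piMl //.
  have /andP [a b] := pih_le1 h i h01.
  by rewrite ger0_norm.
set c := D *m Mi *m rv + (rv' - rv).
set K := fun h => (pih h *m c) 0 0.
have cvgK : K @ 0^'+ --> (pi *m c) 0 0.
  rewrite /K; under eq_fun do rewrite mxE.
  rewrite mxE; apply: cvg_sumr => i; apply: cvgMl; exact: cvg_pi.
have JmixE h : 0 <= h <= 1 -> Jmu_mix p r d d' h = J + h * K h.
  move=> h01.
  have e : pih h *m (rv + h *: (rv' - rv)) = pi *m rv + h *: (pih h *m c).
    rewrite mulmxDr {1}(E1 h h01) mulmxDl -addrA; congr (_ + _).
    by rewrite -scalemxAl -scalemxAr -scalerDr /c mulmxDr !mulmxA.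
  have := congr1 (fun M : 'M[R]_1 => M 0 0) e.
  by rewrite /Jmu_mix -/(pih h) /rmix -/rv -/rv' => ->; rewrite mxE [X in _ + X]mxE.
set Jms := Jmusig beta p r d.
have hf : f = g - P *m g + Jms *: u.
  by rewrite {1}hg -/f -/u -/P -/Jms addrK subrK.
have poisson h : 0 <= h <= 1 ->
    (pih h *m f) 0 0 - (pi *m f) 0 0 = h * (pih h *m D *m g) 0 0.
  move=> h01; have [pP _] := spih h h01.
  have ePh : pih h *m P = pih h - h *: (pih h *m D).
    by rewrite -{2}pP mulmxDr -scalemxAr addrK.
  have e : (pih h - pi) *m f = h *: (pih h *m D *m g).
    rewrite {1}hf [in LHS]mulmxDr [in LHS]mulmxBr -[in LHS]scalemxAr [in LHS]mulmxBl.
    rewrite [(pih h - pi) *m u]mulmxBl (stat_one spi) (stat_one (spih h h01)).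
    rewrite subrr scaler0 addr0 mulmxA [in LHS]mulmxBl ePh piP.
    by rewrite !mulmxBl -scalemxAl zmod_lem.
  have := congr1 (fun M : 'M[R]_1 => M 0 0) e.
  by rewrite mulmxBl mxE [in RHS]mxE [X in _ + X]mxE.
have P0E : Pmix p d d' 0 = P by rewrite /Pmix scale0r addr0.
have J0 : Jmu_mix p r d d' 0 = J by rewrite /Jmu_mix P0E /rmix scale0r addr0.
have f0 : fmix beta p r d d' 0 = f.
  apply/matrixP => i j; rewrite !mxE J0 -/J; ring.
have Jms0 : Jmusig_mix beta p r d d' 0 = (pi *m f) 0 0.
  by rewrite /Jmusig_mix P0E f0.
pose W i k h := beta * k * (2 * r i (d i) - 2 * J - h * k)
  + (r i (d' i) - beta * ((r i (d' i) - J - h * k) * (r i (d' i) - J - h * k))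
     - r i (d i) + beta * ((r i (d i) - J - h * k) * (r i (d i) - J - h * k))).
have fdiff h i : 0 <= h <= 1 ->
    fmix beta p r d d' h i 0 - f i 0 = h * W i (K h) h.
  move=> h01; rewrite !mxE (JmixE h h01) -/J /W; ring.
apply: (@cvg_near_eqr _ _ (fun h => \sum_i pih h 0 i * ((D *m g) i 0 + W i (K h) h))).
  near=> h.
  have h01 : 0 <= h <= 1 by near: h; exact: hnear.
  have h0 : 0 < h by near: h; exact: nbhs_right_gt.
  rewrite Jms0 /Jmusig_mix.
  change (stat_dist (Pmix p d d' h)) with (pih h).
  have -> : (pih h *m fmix beta p r d d' h) 0 0 = (pih h *m f) 0 0
      + \sum_i pih h 0 i * (fmix beta p r d d' h i 0 - f i 0).
    rewrite !mxE -big_split; apply: eq_bigr => i _ /=; ring.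
  rewrite addrAC poisson // -mulmxA [X in h * X]mxE.
  have -> : \sum_i pih h 0 i * (fmix beta p r d d' h i 0 - f i 0) = \sum_i pih h 0 i * (h * W i (K h) h).
    by apply: eq_bigr => i _; rewrite fdiff.
  transitivity (h^-1 * (h * \sum_i pih h 0 i * ((D *m g) i 0 + W i (K h) h))).
    congr (_ * _); rewrite !mulr_sumr -big_split; apply: eq_bigr => i _ /=; ring.
  by rewrite mulKf // gt_eqF.
set K0 := (pi *m c) 0 0.
have hJ : \sum_i pi 0 i * r i (d i) = J.
  by rewrite /J /Jmu mxE; apply: eq_bigr => i _; rewrite mxE.
have -> : (pi *m ((Pmat p d' - Pmat p d) *m g
          + \col_i (r i (d' i) - beta * (r i (d' i) - J) ^+ 2
                    - r i (d i) + beta * (r i (d i) - J) ^+ 2))) 0 0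
   = \sum_i pi 0 i * ((D *m g) i 0 + W i K0 0).
  rewrite mxE; apply/eqP; rewrite -subr_eq0 -sumrB.
  rewrite (eq_bigr (fun i => 2 * beta * K0 * (J * pi 0 i - pi 0 i * r i (d i)))); last first.
    by move=> i _; rewrite !mxE /W; ring.
  by rewrite -mulr_sumr sumrB -mulr_sumr pi1 mulr1 hJ subrr mulr0.
apply: cvg_sumr => i; apply: cvgM; first exact: cvg_pi.
apply: cvgD; first exact: cvg_cst.
rewrite /W.
repeat (first [exact: cvg_cst | exact: cvgK | exact: cvg_idr | apply: cvgD | apply: cvgB | apply: cvgM | apply: cvgN]).
Unshelve. all: by end_near.
Qed.
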